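(* Let $\mathcal H_1,\mathcal H_2$ be finite-dimensional Hilbert spaces and let $\psi\in\mathcal H_1\otimes\mathcal H_2$ be a unit vector with Schmidt representation $\psi=\sum_i\sqrt{p_i}\,\phi_i\otimes\chi_i$, where $\{\phi_i\}$ and $\{\chi_i\}$ are orthonormal bases of $\mathcal H_1$ and $\mathcal H_2$ respectively, $p_i\ge 0$ and $\sum_i p_i=1$. Let $P_\psi=|\psi\rangle\langle\psi|$ be the orthogonal projection onto $\mathbb C\psi$. Then $$\|P_\psi\|_\gamma=\sum_{i,j}\sqrt{p_ip_j}=\Big(\sum_i\sqrt{p_i}\Big)^2 .$$
   Context: For a finite-dimensional Hilbert space $\mathcal H$, $\mathcal T(\mathcal H)$ denotes the trace class operators on $\mathcal H$ (here all linear operators) and $\|x\|_1=\mathrm{Tr}\sqrt{x^\dagger x}$ the trace norm. For $t$ an operator on $\mathcal H_1\otimes\mathcal H_2$ (finite-dimensional), the greatest cross norm is $$\|t\|_\gamma:=\inf\Big\{\sum_{i=1}^n\|u_i\|_1\|v_i\|_1\ :\ t=\sum_{i=1}^n u_i\otimes v_i,\ u_i\in\mathcal T(\mathcal H_1),\ v_i\in\mathcal T(\mathcal H_2),\ n\in\mathbb N\Big\},$$ the infimum over all finite decompositions of $t$ into elementary tensors. *)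

(* Defs.v *)
From HB Require Import structures.
From mathcomp Require Import all_boot all_order all_algebra.
From mathcomp Require Import complex mxtens.
From mathcomp Require Import boolp classical_sets reals.
Set Implicit Arguments. Unset Strict Implicit. Unset Printing Implicit Defensive.
Import Order.TTheory GRing.Theory Num.Theory.
Local Open Scope ring_scope.
Local Open Scope classical_set_scope.

Definition adj {R : realType} {m n : nat} (A : 'M[R[i]]_(m, n)) : 'M[R[i]]_(n, m) :=
  (map_mx (@conjc R) A)^T.

Definition psd {R : realType} {n : nat} (A : 'M[R[i]]_n) : Prop :=
  adj A = A /\ forall x : 'cV[R[i]]_n, 0 <= (adj x *m A *m x) ord0 ord0.

(* trace norm ||x||_1 = Tr sqrt(x^dagger x), where sqrt(x^dagger x) is the
   (unique) positive semidefinite square root S of x^dagger x, S *m S = x^dagger x. *)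
Definition trace_norm {R : realType} {n : nat} (x : 'M[R[i]]_n) : R :=
  xget 0 [set t : R | exists S : 'M[R[i]]_n,
     psd S /\ S *m S = adj x *m x /\ (\tr S) = (t%:C)%C].

(* greatest cross norm on operators of H1 (x) H2 = C^n1 (x) C^n2
   (Kronecker product tensmx, notation *t) *)
Definition gamma_norm {R : realType} {n1 n2 : nat} (t : 'M[R[i]]_(n1 * n2)) : R :=
  inf [set s : R | exists (N : nat) (u : 'I_N -> 'M[R[i]]_n1) (v : 'I_N -> 'M[R[i]]_n2),
     t = \sum_(k < N) (u k *t v k) /\
     s = \sum_(k < N) trace_norm (u k) * trace_norm (v k)].

(* Main.v *)
Require Import Defs.
From HB Require Import structures.
From mathcomp Require Import all_boot all_order all_algebra.
From mathcomp Require Import complex mxtens.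
From mathcomp Require Import boolp classical_sets reals.
From mathcomp Require Import spectral sesquilinear.
Import Order.TTheory GRing.Theory Num.Theory.
Local Open Scope ring_scope.
Set Implicit Arguments. Unset Strict Implicit.


Section Helpers.
Variable R : realType.
Local Notation C := (R[i]).

Lemma adjK m n (A : 'M[C]_(m, n)) : adj (adj A) = A.
Proof. by apply/matrixP => i j; rewrite !mxE conjcK. Qed.

Lemma adjE m n (A : 'M[C]_(m, n)) i j : adj A i j = conjc (A j i).
Proof. by rewrite !mxE. Qed.

Lemma adj_mul m n p (A : 'M[C]_(m, n)) (B : 'M[C]_(n, p)) :
  adj (A *m B) = adj B *m adj A.
Proof. by rewrite /adj map_mxM trmx_mul. Qed.

Lemma adjD m n (A B : 'M[C]_(m, n)) : adj (A + B) = adj A + adj B.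
Proof. by apply/matrixP => i j; rewrite !mxE rmorphD. Qed.

Lemma adj_sum m n I r (P : pred I) (F : I -> 'M[C]_(m, n)) :
  adj (\sum_(i <- r | P i) F i) = \sum_(i <- r | P i) adj (F i).
Proof.
by apply/matrixP => i j; rewrite !mxE !summxE rmorph_sum; apply: eq_bigr => l _; rewrite !mxE.
Qed.

Lemma adjZc m n (c : C) (A : 'M[C]_(m, n)) : adj (c *: A) = conjc c *: adj A.
Proof. by apply/matrixP => i j; rewrite !mxE rmorphM. Qed.

Lemma adj_tens m n p q (A : 'M[C]_(m, n)) (B : 'M[C]_(p, q)) :
  adj (A *t B) = adj A *t adj B.
Proof. by apply/matrixP => i j; rewrite !mxE rmorphM. Qed.

Lemma adj_scalar n (c : C) : adj (c%:M : 'M[C]_n) = (conjc c)%:M.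
Proof.
by apply/matrixP => i j; rewrite !mxE rmorphMn eq_sym.
Qed.

Lemma adj_diag n (d : 'rV[C]_n) : adj (diag_mx d) = diag_mx (map_mx conjc d).
Proof. by rewrite /adj map_diag_mx tr_diag_mx. Qed.

Lemma adj_delta m n i j : adj (delta_mx i j : 'M[C]_(m, n)) = delta_mx j i.
Proof. by rewrite /adj map_delta_mx trmx_delta. Qed.

Lemma mx11M n (A : 'M[C]_(1, n)) (B : 'M[C]_(n, 1)) :
  (A *m B) 0 0 = \sum_(j < n) A 0 j * B j 0.
Proof. by rewrite mxE. Qed.

Lemma mx11M1 (A B : 'M[C]_1) : (A *m B) 0 0 = A 0 0 * B 0 0.
Proof. by rewrite mxE big_ord1. Qed.

Lemma adj11 (A : 'M[C]_1) : adj A 0 0 = conjc (A 0 0).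
Proof. by rewrite !mxE. Qed.

Lemma nrm_ge0 m n (M : 'M[C]_(m, n)) j : 0 <= (adj M *m M) j j.
Proof.
rewrite mxE; apply: sumr_ge0 => i _; rewrite !mxE mulrC.
exact: mul_conjC_ge0.
Qed.

Lemma adjMM0 m n (M : 'M[C]_(m, n)) : adj M *m M = 0 -> M = 0.
Proof.
move=> H; apply/matrixP => i j; rewrite mxE.
have /matrixP /(_ j j) := H; rewrite mxE [RHS]mxE => /eqP.
rewrite psumr_eq0; last by move=> l _; rewrite !mxE mulrC mul_conjC_ge0.
move=> /allP /(_ i (mem_index_enum _)) /=; rewrite !mxE mulrC mul_conjC_eq0.
by move/eqP.
Qed.

Lemma mulmx_colrow m n p (A : 'M[C]_(m, n)) (B : 'M[C]_(n, p)) :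
  A *m B = \sum_(i < n) col i A *m row i B.
Proof.
apply/matrixP => a b; rewrite mxE summxE; apply: eq_bigr => i _.
by rewrite !mxE big_ord1 !mxE.
Qed.

Lemma tens_suml m n p q I r (P : pred I) (F : I -> 'M[C]_(m, n)) (B : 'M[C]_(p, q)) :
  (\sum_(i <- r | P i) F i) *t B = \sum_(i <- r | P i) (F i *t B).
Proof.
apply/matrixP => a b; rewrite !mxE !summxE mulr_suml; apply: eq_bigr => l _.
by rewrite !mxE.
Qed.

Lemma tens_sumr m n p q I r (P : pred I) (F : I -> 'M[C]_(p, q)) (A : 'M[C]_(m, n)) :
  A *t (\sum_(i <- r | P i) F i) = \sum_(i <- r | P i) (A *t F i).
Proof.
apply/matrixP => a b; rewrite !mxE !summxE mulr_sumr; apply: eq_bigr => l _.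
by rewrite !mxE.
Qed.

Lemma tensZl m n p q (c : C) (A : 'M[C]_(m, n)) (B : 'M[C]_(p, q)) :
  (c *: A) *t B = c *: (A *t B).
Proof. by apply/matrixP => a b; rewrite !mxE mulrA. Qed.

Lemma tensZr m n p q (c : C) (A : 'M[C]_(m, n)) (B : 'M[C]_(p, q)) :
  A *t (c *: B) = c *: (A *t B).
Proof. by apply/matrixP => a b; rewrite !mxE mulrCA. Qed.

Lemma tens11 (A B : 'M[C]_1) : (A *t B) 0 0 = A 0 0 * B 0 0.
Proof. by rewrite !mxE /=; congr (A _ _ * B _ _); apply: val_inj. Qed.

Lemma conjc_ge0 (z : C) : 0 <= z -> conjc z = z.
Proof. exact: geC0_conj. Qed.

Lemma normcJ' (z : C) : `|conjc z| = `|z|.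
Proof. exact: norm_conjC. Qed.

Lemma mulcJ (z : C) : z * conjc z = `|z| ^+ 2.
Proof. by rewrite -normCK. Qed.

End Helpers.


Section Spec.
Variable R : realType.
Local Notation C := (R[i]).

Lemma adj_tC n (P : 'M[C]_n) : adj P = map_mx (@Num.conj C) (P^T).
Proof. by rewrite /adj map_trmx. Qed.

Lemma psd_decomp n (A : 'M[C]_n) : psd A ->
  exists (P : 'M[C]_n) (d : 'rV[C]_n),
    [/\ P *m adj P = 1%:M, adj P *m P = 1%:M,
        A = adj P *m diag_mx d *m P & forall i, 0 <= d 0 i].
Proof.
move=> [hA pA].
have An : A \is normalmx.
  apply/normalmxP; by rewrite -adj_tC hA.
have := orthomx_spectralP An.
set P := spectralmx A; set d := spectral_diag A => EA.
have PU : P *m adj P = 1%:M.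
  have /unitarymxP := spectral_unitarymx A; by rewrite -/P -adj_tC.
have PU' : adj P *m P = 1%:M by apply: mulmx1C.
have iP : invmx P = adj P.
  rewrite invmx_unitary; first by rewrite adj_tC.
  exact: spectral_unitarymx.
have EA' : A = adj P *m diag_mx d *m P by rewrite -iP.
exists P, d; split => // i.
have := pA (adj P *m delta_mx i 0).
rewrite adj_mul adjK adj_delta EA' !mulmxA -[delta_mx 0 i *m P *m adj P]mulmxA PU mulmx1.
rewrite -(mulmxA _ P) PU mulmx1 -rowE -colE !mxE eqxx.
by [].
Qed.


Lemma diag_quad n (e : 'rV[C]_n) (z : 'cV[C]_n) : (forall j, 0 <= e 0 j) ->
  0 <= (adj z *m diag_mx e *m z) 0 0.
Proof.
move=> he; rewrite mul_mx_diag mxE; apply: sumr_ge0 => j _.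
rewrite !mxE mulrAC; apply: mulr_ge0 => //.
by rewrite mulrC mul_conjC_ge0.
Qed.

Lemma psd_AA n (x : 'M[C]_n) : psd (adj x *m x).
Proof.
split; first by rewrite adj_mul adjK.
move=> y; rewrite mulmxA -adj_mul -mulmxA; exact: nrm_ge0.
Qed.

Lemma tr_decomp n (P : 'M[C]_n) (d : 'rV[C]_n) : P *m adj P = 1%:M ->
  \tr (adj P *m diag_mx d *m P) = \sum_j d 0 j.
Proof. by move=> PU; rewrite mxtrace_mulC mulmxA PU mul1mx mxtrace_diag. Qed.

Lemma sqrt_exists n (x : 'M[C]_n) : exists S : 'M[C]_n,
  [/\ psd S, S *m S = adj x *m x & exists t : R, \tr S = t%:C%C].
Proof.
have [P [d [PU PU' EA hd]]] := psd_decomp (psd_AA x).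
pose e := map_mx sqrtC d.
have he : forall j, 0 <= e 0 j by move=> j; rewrite mxE sqrtC_ge0.
exists (adj P *m diag_mx e *m P); split.
- split.
    rewrite !adj_mul adjK adj_diag mulmxA; congr (_ *m diag_mx _ *m _).
    by apply/matrixP => a b; rewrite !mxE conjc_ge0 // sqrtC_ge0 [a]ord1 hd.
  move=> y; rewrite -!mulmxA [diag_mx e *m _]mulmxA !mulmxA -adj_mul.
  by rewrite -mulmxA; apply: diag_quad.
- rewrite EA -!mulmxA; congr (_ *m _); rewrite !mulmxA -[_ *m P *m adj P]mulmxA PU mulmx1.
  congr (_ *m _); rewrite mulmx_diag; congr diag_mx.
  by apply/matrixP => a b; rewrite !mxE -expr2 sqrtCK [a]ord1.
- exists (complex.Re (\tr (adj P *m diag_mx e *m P))).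
  rewrite RRe_real //; apply: ger0_real.
  by rewrite tr_decomp //; apply: sumr_ge0 => j _.
Qed.

Lemma psd_tr_ge0 n (S : 'M[C]_n) : psd S -> 0 <= \tr S.
Proof.
move=> pS; have [P [d [PU _ -> hd]]] := psd_decomp pS.
by rewrite tr_decomp //; apply: sumr_ge0.
Qed.

Lemma tn_spec n (x : 'M[C]_n) : exists S : 'M[C]_n,
  [/\ psd S, S *m S = adj x *m x & \tr S = (trace_norm x)%:C%C].
Proof.
rewrite /trace_norm.
set P := (X in xget _ X).
have : P (xget 0 P).
  apply: xgetPex; have [S [pS ES [t Et]]] := sqrt_exists x.
  by exists t; exists S.
by move=> [S [pS [ES Et]]]; exists S.
Qed.

Lemma tn_ge0 n (x : 'M[C]_n) : 0 <= trace_norm x.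
Proof.
have [S [pS _ Et]] := tn_spec x.
by rewrite -(@ler0c R) -Et psd_tr_ge0.
Qed.

Lemma tn_rank1 n (v : 'cV[C]_n) (x : 'M[C]_n) (c : R) :
  adj v *m v = 1%:M -> 0 <= c ->
  adj x *m x = (c%:C%C ^+ 2) *: (v *m adj v) -> trace_norm x = c.
Proof.
move=> hv hc hx.
have [S [[hS pS] SS Et]] := tn_spec x.
set Q := v *m adj v in hx.
have QQ : Q *m Q = Q by rewrite /Q mulmxA -(mulmxA v) hv mulmx1.
have aQ : adj Q = Q by rewrite /Q adj_mul adjK.
have QW : Q *m (1%:M - Q) = 0 by rewrite mulmxBr mulmx1 QQ subrr.
have SW : S *m (1%:M - Q) = 0.
  apply: adjMM0; rewrite adj_mul hS mulmxA -(mulmxA _ S S) SS hx -scalemxAr -scalemxAl.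
  by rewrite -mulmxA QW mulmx0 scaler0.
have SQ : S = S *m Q.
  have H : S *m ((1%:M - Q) + Q) = S by rewrite subrK mulmx1.
  by move: H; rewrite mulmxDr SW add0r => ->.
have QS : S = Q *m S by rewrite -{1}hS {1}SQ adj_mul aQ hS.
set mu := (adj v *m S *m v) 0 0.
have hmu : 0 <= mu by apply: pS.
have ES : S = mu *: Q.
  rewrite QS SQ /Q !mulmxA -(mulmxA v (adj v) S) -(mulmxA v (adj v *m S) v).
  by rewrite (mx11_scalar (adj v *m S *m v)) mul_mx_scalar -scalemxAl.
have trQ : \tr Q = 1 by rewrite /Q mxtrace_mulC hv trace_mx11 mxE.
have E2 : mu ^+ 2 = c%:C%C ^+ 2.
  have := congr1 mxtrace SS; rewrite hx ES -scalemxAr -scalemxAl QQ scalerA !mxtraceZ trQ.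
  by rewrite !mulr1 expr2.
have Emu : mu = c%:C%C.
  by rewrite -(sqrCK hmu) E2 sqrCK // ler0c.
apply: (@complexI R); rewrite -Et ES mxtraceZ trQ mulr1 Emu //.
Qed.

End Spec.


Section Bessel.
Variable R : realType.
Local Notation C := (R[i]).

Lemma cs_row n (u v : 'rV[C]_n) : `|(u *m map_mx conjc (v^T)) 0 0| ^+ 2 <=
   (u *m map_mx conjc (u^T)) 0 0 * (v *m map_mx conjc (v^T)) 0 0.
Proof.
rewrite -!(dotmxE (C:=R[i])).
by case: (CauchySchwarz (@dotmx R[i] n) u v).
Qed.

Lemma adj_trT m n (w : 'M[C]_(m, n)) : (adj w)^T = map_mx conjc w.
Proof. by rewrite /adj trmxK. Qed.

Lemma cs_col n (f w : 'cV[C]_n) :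
  `|(adj w *m f) 0 0| ^+ 2 <= (adj w *m w) 0 0 * (adj f *m f) 0 0.
Proof.
have := cs_row f^T w^T; rewrite !trmxK.
have E : forall a b : 'cV[C]_n, (adj a *m b) 0 0 = (b^T *m map_mx conjc a) 0 0.
  by move=> a b; rewrite -(adj_trT a) -trmx_mul [in RHS]mxE.
by rewrite -!E mulrC.
Qed.

Lemma adjB m n (A B : 'M[C]_(m, n)) : adj (A - B) = adj A - adj B.
Proof. by apply/matrixP => i j; rewrite !mxE rmorphB. Qed.

Lemma adj1c n : adj (1%:M : 'M[C]_n) = 1%:M.
Proof. by rewrite adj_scalar conjc1. Qed.

Lemma bessel n k (chi : 'I_k -> 'cV[C]_n) (g : 'cV[C]_n) :
  (forall a b, adj (chi a) *m chi b = (a == b)%:R%:M) ->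
  \sum_a (adj g *m chi a) 0 0 * (adj (chi a) *m g) 0 0 <= (adj g *m g) 0 0.
Proof.
move=> hchi.
pose M := \sum_a chi a *m adj (chi a).
have EL : \sum_a (adj g *m chi a) 0 0 * (adj (chi a) *m g) 0 0 = (adj g *m M *m g) 0 0.
  rewrite /M mulmx_sumr mulmx_suml summxE; apply: eq_bigr => a _.
  by rewrite -mx11M1 !mulmxA.
have MM : M *m M = M.
  rewrite {1}/M mulmx_suml; apply: eq_bigr => a _.
  rewrite mulmx_sumr (bigD1 a) //= big1 ?addr0.
    by rewrite mulmxA -(mulmxA (chi a)) hchi eqxx mulmx1.
  move=> b hb; rewrite mulmxA -(mulmxA (chi a)) hchi.
  by rewrite eq_sym (negPf hb) mul_mx_scalar scale0r mul0mx.
have aM : adj M = M.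
  by rewrite /M adj_sum; apply: eq_bigr => a _; rewrite adj_mul adjK.
pose W := 1%:M - M.
have aW : adj W = W by rewrite /W adjB adj1c aM.
have WW : W *m W = W by rewrite /W mulmxBl mul1mx mulmxBr mulmx1 MM subrr subr0.
have := nrm_ge0 (W *m g) 0.
rewrite adj_mul aW mulmxA -(mulmxA _ W W) WW /W mulmxBr mulmx1 mulmxBl mxE. have -> : (- (adj g *m M *m g)) 0 0 = - (adj g *m M *m g) 0 0 by rewrite mxE.
by rewrite -EL subr_ge0.
Qed.

End Bessel.


Section BCS.
Variable R : realType.
Local Notation C := (R[i]).

Lemma psi_tens n1 n2 k (phi : 'I_k -> 'cV[C]_n1) (chi : 'I_k -> 'cV[C]_n2)
  (f : 'cV[C]_n1) (g : 'cV[C]_n2) :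
  (adj (\sum_a phi a *t chi a) *m (f *t g)) 0 0 =
  \sum_a (adj (phi a) *m f) 0 0 * (adj (chi a) *m g) 0 0.
Proof.
rewrite adj_sum mulmx_suml summxE; apply: eq_bigr => a _.
by rewrite adj_tens tensmx_mul tens11.
Qed.

Lemma bcs n1 n2 k (phi : 'I_k -> 'cV[C]_n1) (chi : 'I_k -> 'cV[C]_n2)
  (f : 'cV[C]_n1) (g : 'cV[C]_n2) :
  (forall a b, adj (phi a) *m phi b = (a == b)%:R%:M) ->
  (forall a b, adj (chi a) *m chi b = (a == b)%:R%:M) ->
  `|(adj (\sum_a phi a *t chi a) *m (f *t g)) 0 0| ^+ 2
     <= (adj f *m f) 0 0 * (adj g *m g) 0 0.
Proof.
move=> hphi hchi; rewrite psi_tens.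
pose be a := (adj (chi a) *m g) 0 0.
pose w := \sum_a conjc (be a) *: phi a.
have E1 : (adj w *m f) 0 0 = \sum_a (adj (phi a) *m f) 0 0 * (adj (chi a) *m g) 0 0.
  rewrite /w adj_sum mulmx_suml summxE; apply: eq_bigr => a _.
  by rewrite (adjZc (conjc (be a))) conjcK -scalemxAl mxE mulrC.
have E2 : (adj w *m w) 0 0 = \sum_a (adj g *m chi a) 0 0 * (adj (chi a) *m g) 0 0.
  rewrite /w adj_sum mulmx_suml summxE; apply: eq_bigr => a _.
  rewrite mulmx_sumr summxE (bigD1 a) // big1 ?addr0.
    rewrite adjZc conjcK -scalemxAl -scalemxAr hphi eqxx !mxE /= mulr1n mulr1.
    rewrite addr0 mulrC; congr (_ * _).
      by rewrite /be -adj11 adj_mul adjK mxE.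
    by rewrite /be mxE.
  move=> b /andP[_ hb]; rewrite adjZc -scalemxAl -scalemxAr hphi eq_sym (negPf hb).
  by rewrite !mxE /= mulr0n !mulr0.
rewrite -E1; apply: (le_trans (cs_col f w)); rewrite mulrC.
apply: ler_wpM2l; first exact: nrm_ge0.
by rewrite E2; apply: bessel.
Qed.

End BCS.


Section Lower.
Variable R : realType.
Local Notation C := (R[i]).

Lemma col_nrm m n (M : 'M[C]_(m, n)) i :
  (adj (col i M) *m col i M) 0 0 = (adj M *m M) i i.
Proof. by rewrite !mxE; apply: eq_bigr => j _; rewrite !mxE. Qed.

Lemma row_nrm m n (M : 'M[C]_(m, n)) i :
  (row i M *m adj (row i M)) 0 0 = (M *m adj M) i i.
Proof. by rewrite !mxE; apply: eq_bigr => j _; rewrite !mxE. Qed.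

Lemma sq_le (a b : C) : 0 <= b -> `|a| ^+ 2 <= b ^+ 2 -> `|a| <= b.
Proof.
move=> hb; rewrite (ler_pXn2r (n:=2)) //; rewrite nnegrE //.
Qed.

Lemma decomp_sum n m (x : 'M[C]_(m, n)) (P : 'M[C]_n) : adj P *m P = 1%:M ->
  x = \sum_i col i (x *m adj P) *m row i P.
Proof. by move=> PU; rewrite -mulmx_colrow -mulmxA PU mulmx1. Qed.

Lemma svd_nrm n (x S P : 'M[C]_n) (d : 'rV[C]_n) i :
  S *m S = adj x *m x -> P *m adj P = 1%:M -> S = adj P *m diag_mx d *m P ->
  (adj (col i (x *m adj P)) *m col i (x *m adj P)) 0 0 = d 0 i ^+ 2.
Proof.
move=> SS PU ES; rewrite col_nrm adj_mul adjK mulmxA -(mulmxA P) -SS ES.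
rewrite !mulmxA PU mul1mx -(mulmxA _ P (adj P)) PU mulmx1 -(mulmxA _ P (adj P)) PU mulmx1.
rewrite mulmx_diag !mxE eqxx /=.
by rewrite expr2.
Qed.

Lemma lower_tens n1 n2 k (phi : 'I_k -> 'cV[C]_n1) (chi : 'I_k -> 'cV[C]_n2)
  (x : 'M[C]_n1) (y : 'M[C]_n2) :
  (forall a b, adj (phi a) *m phi b = (a == b)%:R%:M) ->
  (forall a b, adj (chi a) *m chi b = (a == b)%:R%:M) ->
  `|(adj (\sum_a phi a *t chi a) *m (x *t y) *m (\sum_a phi a *t chi a)) 0 0|
     <= (trace_norm x * trace_norm y)%:C%C.
Proof.
move=> hphi hchi.
set Psi := \sum_a phi a *t chi a.
have [S [pS SS tS]] := tn_spec x; have [P [d [PU PU' ES hd]]] := psd_decomp pS.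
have [T [pT TT tT]] := tn_spec y; have [Q [e [QU QU' ET he]]] := psd_decomp pT.
have -> : x *t y = \sum_i \sum_j ((col i (x *m adj P) *t col j (y *m adj Q)) *m (row i P *t row j Q)).
  rewrite {1}(decomp_sum x PU') {1}(decomp_sum y QU') tens_suml; apply: eq_bigr => i _.
  by rewrite tens_sumr; apply: eq_bigr => j _; rewrite tensmx_mul.
rewrite (mulmx_sumr (adj Psi)) (mulmx_suml Psi) summxE.
apply: (le_trans (ler_norm_sum _ _ _)).
have -> : (trace_norm x * trace_norm y)%:C%C = \sum_i \sum_j (d 0 i * e 0 j).
  by rewrite rmorphM /= -tS -tT ES ET !tr_decomp // mulr_suml; apply: eq_bigr => i _; rewrite mulr_sumr.
apply: ler_sum => i _.
rewrite (mulmx_sumr (adj Psi)) (mulmx_suml Psi) summxE.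
apply: (le_trans (ler_norm_sum _ _ _)).
apply: ler_sum => j _.
rewrite !mulmxA -(mulmxA _ _ Psi) mx11M1 normrM -[d 0 i * e 0 j]mulr1.
apply: ler_pM; [exact: normr_ge0 | exact: normr_ge0 | | ].
  apply: sq_le; first exact: mulr_ge0.
  apply: (le_trans (bcs _ _ hphi hchi)).
  by rewrite (svd_nrm _ SS PU ES) (svd_nrm _ TT QU ET) exprMn.
apply: sq_le; first exact: ler01.
rewrite -normcJ' -adj11 adj_mul (adj_tens (row i P) (row j Q)) expr1n.
apply: (le_trans (bcs _ _ hphi hchi)).
by rewrite !adjK !row_nrm PU QU !mxE !eqxx mulr1.
Qed.

End Lower.


Section Main.
Variable R : realType.
Local Notation C := (R[i]).

Lemma sum_unindex (V : nmodType) k (F : 'I_k -> 'I_k -> V) :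
  \sum_(l < k * k) F (mxtens_unindex l).1 (mxtens_unindex l).2 = \sum_a \sum_b F a b.
Proof.
rewrite pair_big /=; symmetry.
rewrite (reindex (@mxtens_unindex k k)) //=.
by exists (@mxtens_index k k) => i _; rewrite (mxtens_indexK, mxtens_unindexK).
Qed.

Lemma Psi_psi n1 n2 k (phi : 'I_k -> 'cV[C]_n1) (chi : 'I_k -> 'cV[C]_n2) (c : 'I_k -> C) :
  (forall a b, adj (phi a) *m phi b = (a == b)%:R%:M) ->
  (forall a b, adj (chi a) *m chi b = (a == b)%:R%:M) ->
  (adj (\sum_a phi a *t chi a) *m (\sum_a c a *: (phi a *t chi a))) 0 0 = \sum_a c a.
Proof.
move=> hphi hchi; rewrite mulmx_sumr summxE; apply: eq_bigr => a _.
rewrite -scalemxAr mxE psi_tens (bigD1 a) //= big1 ?addr0.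
  by rewrite (hphi a a) (hchi a a) eqxx !mxE eqxx !mulr1.
by move=> b hb; rewrite (hphi b a) (hchi b a) (negPf hb) !mxE mul0r.
Qed.

Lemma tn_u n (f g : 'cV[C]_n) (c : R) : adj f *m f = 1%:M -> adj g *m g = 1%:M ->
  0 <= c -> trace_norm (c%:C%C *: (f *m adj g)) = c.
Proof.
move=> hf hg hc; apply: (tn_rank1 (v := g)) => //.
rewrite adjZc conjc_real adj_mul adjK -scalemxAl -scalemxAr scalerA.
by rewrite mulmxA -(mulmxA g) hf mulmx1 expr2.
Qed.

Lemma tn_v n (f g : 'cV[C]_n) : adj f *m f = 1%:M -> adj g *m g = 1%:M ->
  trace_norm (f *m adj g) = 1.
Proof.
move=> hf hg; have := tn_u hf hg ler01.
by rewrite rmorph1 scale1r.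
Qed.

End Main.

Unset Implicit Arguments.
Theorem proposition4 (R : realType) (n1 n2 k : nat)
  (phi : 'I_k -> 'cV[R[i]]_n1) (chi : 'I_k -> 'cV[R[i]]_n2) (p : 'I_k -> R)
  (psi : 'cV[R[i]]_(n1 * n2)) :
  (forall a b : 'I_k, adj (phi a) *m phi b = (a == b)%:R%:M) ->
  (forall a b : 'I_k, adj (chi a) *m chi b = (a == b)%:R%:M) ->
  (forall a, 0 <= p a) ->
  \sum_(a < k) p a = 1 ->
  psi = \sum_(a < k) ((Num.sqrt (p a))%:C)%C *: (phi a *t chi a) ->
  adj psi *m psi = 1%:M ->
  gamma_norm (psi *m adj psi) = \sum_(a < k) \sum_(b < k) Num.sqrt (p a * p b) /\
  gamma_norm (psi *m adj psi) = (\sum_(a < k) Num.sqrt (p a)) ^+ 2.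
Proof.
move=> hphi hchi hp hsum hpsi hnorm.
set s := \sum_(a < k) Num.sqrt (p a).
have Es2 : \sum_a \sum_b Num.sqrt (p a * p b) = s ^+ 2.
  rewrite expr2 mulr_suml; apply: eq_bigr => a _; rewrite mulr_sumr.
  by apply: eq_bigr => b _; rewrite sqrtrM.
suff -> : gamma_norm (psi *m adj psi) = s ^+ 2 by split.
have s_ge0 : 0 <= s by apply: sumr_ge0 => a _; exact: sqrtr_ge0.
set Psi := \sum_a phi a *t chi a.
have EPp : (adj Psi *m psi) 0 0 = s%:C%C.
  by rewrite hpsi Psi_psi // /s rmorph_sum.
have EL : (adj Psi *m (psi *m adj psi) *m Psi) 0 0 = (s ^+ 2)%:C%C.
  rewrite !mulmxA -(mulmxA _ (adj psi) Psi) mx11M1 EPp.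
  rewrite -[adj psi *m Psi]adjK adj_mul adjK adj11 EPp conjc_real.
  by rewrite rmorphXn /= expr2.
rewrite /gamma_norm.
set E := (X in inf X).
have lb : forall y, E y -> s ^+ 2 <= y.
  move=> y [N [u [v [Et Ey]]]].
  rewrite -(@lecR R) -EL Et Ey rmorph_sum /=.
  rewrite -{1}(ger0_norm (x := (adj Psi *m (\sum_(l < N) u l *t v l) *m Psi) 0 0)); last first.
    by rewrite -Et EL ler0c exprn_ge0.
  rewrite (mulmx_sumr (adj Psi)) (mulmx_suml Psi) summxE.
  apply: (le_trans (ler_norm_sum _ _ _)); apply: ler_sum => l _.
  exact: lower_tens.
have h1 : forall b, adj (phi b) *m phi b = 1%:M by move=> b; rewrite hphi eqxx.
have h2 : forall b, adj (chi b) *m chi b = 1%:M by move=> b; rewrite hchi eqxx.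
have mem : E (s ^+ 2).
  pose cc a b := Num.sqrt (p a * p b).
  exists (k * k)%N, (fun l => (cc (mxtens_unindex l).1 (mxtens_unindex l).2)%:C%C *:
      (phi (mxtens_unindex l).1 *m adj (phi (mxtens_unindex l).2))),
    (fun l => chi (mxtens_unindex l).1 *m adj (chi (mxtens_unindex l).2)).
  split.
    have H := sum_unindex (fun a b => ((cc a b)%:C%C *: (phi a *m adj (phi b))) *t (chi a *m adj (chi b))).
    cbv beta in H; rewrite H.
    rewrite hpsi adj_sum mulmx_suml; apply: eq_bigr => a _; rewrite mulmx_sumr; apply: eq_bigr => b _.
    rewrite adjZc conjc_real -scalemxAl -scalemxAr scalerA (adj_tens (phi b) (chi b)) tensZl /cc sqrtrM // rmorphM.
    congr (_ *: _).
    exact (tensmx_mul (phi a) (chi a) (adj (phi b)) (adj (chi b))).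
  have H2 := sum_unindex (fun a b => trace_norm ((cc a b)%:C%C *: (phi a *m adj (phi b))) * trace_norm (chi a *m adj (chi b))).
  symmetry; etransitivity; first exact: H2.
  etransitivity; last exact: Es2.
  apply: eq_bigr => a _; apply: eq_bigr => b _.
  by rewrite tn_u // ?tn_v // ?mulr1 // sqrtr_ge0.
apply/eqP; rewrite eq_le; apply/andP; split.
  apply: (ge_inf _ mem).
  by exists (s ^+ 2) => y Ey; apply: lb.
apply: lb_le_inf; first by exists (s ^+ 2).
by move=> y Ey; apply: lb.
Qed.
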